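(* Let $\eta>0$ and $\alpha\in[0,1)$, and run the fixed-share algorithm with parameters $\eta,\alpha$. Then for all $T\ge1$, all loss vectors $\ell_1,\dots,\ell_T\in[0,1]^d$, and all $u_1,\dots,u_T\in\mathbb R_+^d$, \[ \sum_{t=1}^T\|u_t\|_1\hat p_t^\top\ell_t-\sum_{t=1}^Tu_t^\top\ell_t\le\frac{\|u_1\|_1\ln d}{\eta}+\frac\eta8\sum_{t=1}^T\|u_t\|_1+\frac{m(u_1^T)}{\eta}\ln\frac d\alpha+\frac{\sum_{t=2}^T\|u_t\|_1-m(u_1^T)}{\eta}\ln\frac1{1-\alpha}. \]
   Context: Let $d\ge1$ and $\Delta_d=\{q\in[0,1]^d:\sum_{i=1}^d q_i=1\}$. The generalized share algorithm with learning rate $\eta>0$ and mixing functions $\psi_t:[0,1]^{td}\to\Delta_d$ ($t\ge2$) works as follows: $\hat p_1=v_1=(1/d,\dots,1/d)$. At each round $t=1,2,\dots$ it predicts $\hat p_t=(\hat p_{1,t},\dots,\hat p_{d,t})\in\Delta_d$, observes a loss vector $\ell_t=(\ell_{1,t},\dots,\ell_{d,t})\in[0,1]^d$ (arbitrary), and suffers loss $\hat p_t^\top\ell_t$. It then forms the pre-weights $v_{j,t+1}=\hat p_{j,t}e^{-\eta\ell_{j,t}}/\sum_{i=1}^d\hat p_{i,t}e^{-\eta\ell_{i,t}}$ for $j=1,\dots,d$, sets $v_{t+1}=(v_{1,t+1},\dots,v_{d,t+1})$, and defines $\hat p_{t+1}=\psi_{t+1}(V_{t+1})$ where $V_{t+1}=[v_{i,s}]_{1\le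 i\le d,1\le s\le t+1}$ is the $d\times(t+1)$ matrix of all pre-weights so far. The fixed-share algorithm with parameters $\eta>0$, $\alpha\in[0,1]$ is the generalized share algorithm with the mixing rule $\hat p_{j,t+1}=\alpha/d+(1-\alpha)v_{j,t+1}$ for all $j$ and $t\ge1$. For $x,y\in\mathbb R_+^d$, $D_{\mathrm{TV}}(x,y)=\sum_{i:\,x_i\ge y_i}(x_i-y_i)$, and for $u_1,\dots,u_T\in\mathbb R_+^d$, $m(u_1^T)=\sum_{t=2}^T D_{\mathrm{TV}}(u_t,u_{t-1})$. The convention $\ln(d/0)=+\infty$ applies if $\alpha=0$. *)

(* Defs.v *)
From Stdlib Require Import Reals List.
Import ListNotations.
Open Scope R_scope.

(* Vectors in R^d are functions nat -> R, components indexed 0..d-1.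
   Sequences indexed by rounds t = 1,2,... are functions nat -> ... *)

Definition sumd (d : nat) (f : nat -> R) : R :=
  fold_right Rplus 0 (map f (seq 0 d)).

Definition sum_range (a b : nat) (f : nat -> R) : R :=
  fold_right Rplus 0 (map f (seq a (S b - a))).

Definition exp_update (d : nat) (eta : R) (p l : nat -> R) : nat -> R :=
  fun j => p j * exp (- eta * l j) / sumd d (fun i => p i * exp (- eta * l i)).

Definition fs_mix (d : nat) (alpha : R) (v : nat -> R) : nat -> R :=
  fun j => alpha / INR d + (1 - alpha) * v j.

(* fixed_share_p d eta alpha ell t = \hat p_t (for t >= 1), where
   ell t j = l_{j,t}.  \hat p_1 = uniform. (t = 0 is unused.) *)
Fixpoint fixed_share_p (d : nat) (eta alpha : R) (ell : nat -> nat -> R)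
  (t : nat) : nat -> R :=
  match t with
  | O => fun _ => / INR d
  | S O => fun _ => / INR d
  | S t' => fs_mix d alpha (exp_update d eta (fixed_share_p d eta alpha ell t') (ell t'))
  end.

Definition D_TV (d : nat) (x y : nat -> R) : R :=
  sumd d (fun i => if Rle_dec (y i) (x i) then x i - y i else 0).

Definition shifts (d : nat) (u : nat -> nat -> R) (T : nat) : R :=
  sum_range 2 T (fun t => D_TV d (u t) (u (pred t))).

Definition norm1 (d : nat) (x : nat -> R) : R := sumd d (fun i => Rabs (x i)).

Definition dot (d : nat) (x y : nat -> R) : R := sumd d (fun i => x i * y i).

(* Main.v *)
Require Import Defs.
From Stdlib Require Import Reals Lra Lia List.
Open Scope R_scope.

Definition sumL (l : list nat) (f : nat -> R) := fold_right Rplus 0 (map f l).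

Lemma sL_ext l f g : (forall x, In x l -> f x = g x) -> sumL l f = sumL l g.
Proof. unfold sumL; induction l; simpl; intros H; auto. f_equal; auto. Qed.
Lemma sL_le l f g : (forall x, In x l -> f x <= g x) -> sumL l f <= sumL l g.
Proof. unfold sumL; induction l; simpl; intros H; [lra|]. pose proof (H a (or_introl eq_refl)).
  assert (sumL l f <= sumL l g) by auto. unfold sumL in *; lra. Qed.
Lemma sL_plus l f g : sumL l (fun x => f x + g x) = sumL l f + sumL l g.
Proof. unfold sumL; induction l; simpl; [lra|]. unfold sumL in *; rewrite IHl; lra. Qed.
Lemma sL_minus l f g : sumL l (fun x => f x - g x) = sumL l f - sumL l g.
Proof. unfold sumL; induction l; simpl; [lra|]. unfold sumL in *; rewrite IHl; lra. Qed.
Lemma sL_scal l c f : sumL l (fun x => c * f x) = c * sumL l f.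
Proof. unfold sumL; induction l; simpl; [lra|]. unfold sumL in *; rewrite IHl; lra. Qed.
Lemma sL_const l c : sumL l (fun _ => c) = c * INR (length l).
Proof. unfold sumL; induction l; simpl length; [simpl; lra|]. rewrite S_INR. simpl.
  unfold sumL in *; rewrite IHl; lra. Qed.
Lemma sL_nonneg l f : (forall x, In x l -> 0 <= f x) -> 0 <= sumL l f.
Proof. intros H. assert (sumL l (fun _ => 0) <= sumL l f) by (apply sL_le; auto).
  rewrite sL_const in H0. lra. Qed.
Lemma sL_term l f y : (forall x, In x l -> 0 <= f x) -> In y l -> f y <= sumL l f.
Proof. unfold sumL; induction l; simpl; intros H Hy; [tauto|].
  assert (0 <= sumL l f) by (apply sL_nonneg; auto).
  destruct Hy as [->|Hy]. unfold sumL in *; lra.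
  assert (f y <= sumL l f) by auto. pose proof (H a (or_introl eq_refl)). unfold sumL in *; lra. Qed.
Lemma sL_zero l f : (forall x, In x l -> 0 <= f x) -> sumL l f = 0 -> forall x, In x l -> f x = 0.
Proof. intros H H0 x Hx. pose proof (sL_term l f x H Hx). pose proof (H x Hx). lra. Qed.
Lemma sL_app l1 l2 f : sumL (l1 ++ l2) f = sumL l1 f + sumL l2 f.
Proof. unfold sumL; induction l1; simpl; [lra|]. unfold sumL in *; rewrite IHl1; lra. Qed.
Lemma sL_pos l f : l <> nil -> (forall x, In x l -> 0 < f x) -> 0 < sumL l f.
Proof. destruct l; intros Hn H; [congruence|]. unfold sumL; simpl.
  assert (0 <= sumL l f) by (apply sL_nonneg; intros x Hx; apply Rlt_le, H; right; auto).
  pose proof (H n (or_introl eq_refl)). unfold sumL in *; lra. Qed.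

Lemma sumd_sL d f : sumd d f = sumL (seq 0 d) f.
Proof. reflexivity. Qed.
Lemma sum_range_sL a b f : sum_range a b f = sumL (seq a (S b - a)) f.
Proof. reflexivity. Qed.

Lemma sum_range_S a b f : (a <= S b)%nat -> sum_range a (S b) f = sum_range a b f + f (S b).
Proof. intros H. rewrite !sum_range_sL. replace (S (S b) - a)%nat with (S (S b - a)) by lia.
  rewrite seq_S, sL_app. replace (a + (S b - a))%nat with (S b) by lia. change (sumL (S b :: nil) f) with (f (S b) + 0). ring. Qed.

Lemma in_seq0 d i : In i (seq 0 d) -> (i < d)%nat.
Proof. rewrite in_seq. lia. Qed.
Lemma in_rng a b t : In t (seq a (S b - a)) -> (a <= t <= b)%nat.
Proof. rewrite in_seq. lia. Qed.
From Coquelicot Require Import Coquelicot.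

Lemma deriv_cont f x l : is_derive f x l -> continuity_pt f x.
Proof.
  intros H. apply continuity_pt_filterlim.
  apply (ex_derive_continuous (K:=R_AbsRing) (V:=R_NormedModule)).
  exists l. exact H.
Qed.

Lemma q_pos m h : 0 <= m <= 1 -> 0 < 1 - m + m * exp h.
Proof.
  intros Hm. pose proof (exp_pos h).
  destruct (Req_dec m 0). subst. lra. nra.
Qed.

Lemma k_nonneg m h : 0 <= m <= 1 -> h <= 0 ->
  0 <= m * exp h / (1 - m + m * exp h) - m - h / 4.
Proof.
  intros Hm Hh.
  set (k := fun h => m * exp h / (1 - m + m * exp h) - m - h / 4).
  set (dk := fun h => m * exp h * (1 - m) / (1 - m + m * exp h)^2 - 1/4).
  assert (Hd : forall x, is_derive k x (dk x)).
  { intros x. pose proof (q_pos m x Hm). unfold k, dk. auto_derive.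
    - lra.
    - field. lra. }
  destruct (Req_dec h 0) as [->|Hh0].
  { rewrite exp_0. replace (1 - m + m*1) with 1 by ring. lra. }
  destruct (MVT_gen k h 0 dk) as [c [Hc Heq]].
  { intros; apply Hd. }
  { intros; eapply deriv_cont; apply Hd. }
  assert (dk c <= 0).
  { unfold dk. pose proof (q_pos m c Hm). pose proof (exp_pos c).
    set (q := 1 - m + m * exp c) in *.
    assert (4 * (m * exp c * (1 - m)) <= q ^ 2) by (unfold q; pose proof (pow2_ge_0 (1 - m - m * exp c)); nra).
    assert (0 < q^2) by (apply pow_lt; lra).
    assert (m * exp c * (1 - m) / q ^ 2 <= 1/4).
    { apply Rmult_le_reg_r with (q^2); [lra|].
      unfold Rdiv. rewrite Rmult_assoc, Rinv_l by lra. lra. }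
    lra. }
  unfold Rmin, Rmax in *. destruct (Rle_dec h 0); [|lra].
  assert (k 0 = 0).
  { unfold k. rewrite exp_0. replace (1 - m + m*1) with 1 by ring. field. }
  change (0 <= k h). nra.
Qed.

Lemma hoeff_scalar m eta : 0 <= m <= 1 -> 0 < eta ->
  ln (1 - m + m * exp (- eta)) <= - eta * m + eta ^ 2 / 8.
Proof.
  intros Hm He.
  set (g := fun h => h^2/8 + h*m - ln (1 - m + m * exp h)).
  set (dg := fun h => h/4 + m - m * exp h / (1 - m + m * exp h)).
  assert (Hd : forall x, is_derive g x (dg x)).
  { intros x. pose proof (q_pos m x Hm). unfold g, dg. auto_derive.
    - lra.
    - field. lra. }
  destruct (MVT_gen g (-eta) 0 dg) as [c [Hc Heq]].
  { intros; apply Hd. }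
  { intros; eapply deriv_cont; apply Hd. }
  unfold Rmin, Rmax in *. destruct (Rle_dec (-eta) 0); [|lra].
  pose proof (k_nonneg m c Hm (proj2 Hc)).
  assert (g 0 = 0).
  { unfold g. rewrite exp_0. replace (1 - m + m*1) with 1 by ring. rewrite ln_1. field. }
  assert (dg c <= 0) by (unfold dg; lra).
  assert (0 <= g (-eta)) by nra.
  unfold g in *. replace ((-eta)^2) with (eta^2) in * by ring. lra.
Qed.
Lemma P_succ d eta alpha ell t : (1 <= t)%nat -> fixed_share_p d eta alpha ell (S t) = fs_mix d alpha (exp_update d eta (fixed_share_p d eta alpha ell t) (ell t)).
Proof. destruct t; [lia|]. reflexivity. Qed.

Lemma seq_nn d : (1 <= d)%nat -> seq 0 d <> nil.
Proof. destruct d; [lia|]. simpl; congruence. Qed.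

Lemma W_pos d eta p l : (1 <= d)%nat -> (forall i, (i < d)%nat -> 0 < p i) ->
  0 < sumd d (fun i => p i * exp (- eta * l i)).
Proof. intros Hd Hp. rewrite sumd_sL. apply sL_pos. apply seq_nn; auto.
  intros x Hx. apply in_seq0 in Hx. pose proof (Hp x Hx). pose proof (exp_pos (- eta * l x)). nra. Qed.

Lemma eu_props d eta p l : (1 <= d)%nat -> (forall i, (i < d)%nat -> 0 < p i) ->
  (forall i, (i < d)%nat -> 0 < exp_update d eta p l i <= 1) /\ sumd d (exp_update d eta p l) = 1.
Proof. intros Hd Hp. pose proof (W_pos d eta p l Hd Hp) as HW.
  set (W := sumd d (fun i => p i * exp (- eta * l i))) in *.
  split.
  - intros i Hi. unfold exp_update. fold W.
    assert (Ht : p i * exp (- eta * l i) <= W).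
    { unfold W. rewrite sumd_sL. apply (sL_term _ (fun i => p i * exp (- eta * l i))).
      intros x Hx. apply in_seq0 in Hx. pose proof (Hp x Hx). pose proof (exp_pos (- eta * l x)). nra.
      apply in_seq; lia. }
    pose proof (Hp i Hi). pose proof (exp_pos (- eta * l i)).
    split. apply Rdiv_lt_0_compat; nra.
    apply Rmult_le_reg_r with W; auto. unfold Rdiv. rewrite Rmult_assoc, Rinv_l; lra.
  - unfold exp_update. fold W. rewrite sumd_sL.
    rewrite (sL_ext _ _ (fun i => / W * (p i * exp (- eta * l i)))) by (intros; unfold Rdiv; ring).
    rewrite sL_scal. change (sumL (seq 0 d) (fun i => p i * exp (- eta * l i))) with W. field. lra.
Qed.

Lemma dist d eta alpha ell t : (1 <= d)%nat -> 0 <= alpha < 1 -> (1 <= t)%nat ->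
  (forall i, (i < d)%nat -> 0 < fixed_share_p d eta alpha ell t i) /\
  sumd d (fixed_share_p d eta alpha ell t) = 1.
Proof. intros Hd Ha Ht. assert (HdR : 1 <= INR d) by (apply (le_INR 1); auto).
  induction t as [|t IH]; [lia|].
  destruct (Nat.eq_dec t 0) as [->|Ht0].
  - simpl. split. intros; apply Rinv_0_lt_compat; lra.
    rewrite sumd_sL, sL_const, length_seq. field. lra.
  - destruct IH as [IH1 IH2]; [lia|]. rewrite P_succ by lia.
    destruct (eu_props d eta (fixed_share_p d eta alpha ell t) (ell t) Hd IH1) as [E1 E2].
    unfold fs_mix. split.
    + intros i Hi. pose proof (E1 i Hi). assert (0 <= alpha / INR d) by (unfold Rdiv; apply Rmult_le_pos; [lra|left; apply Rinv_0_lt_compat; lra]). nra.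
    + rewrite sumd_sL, sL_plus, sL_const, length_seq, sL_scal, <- sumd_sL, E2. field. lra.
Qed.
Lemma chord x eta : 0 <= x <= 1 -> exp (- eta * x) <= 1 - x + x * exp (- eta).
Proof. intros Hx. set (c := - eta * x).
  pose proof (exp_ineq1_le (- c)) as H1. pose proof (exp_ineq1_le (- eta - c)) as H2.
  pose proof (exp_pos c).
  assert (E1 : exp c * exp (- c) = 1) by (rewrite <- exp_plus; replace (c + - c) with 0 by ring; apply exp_0).
  assert (E2 : exp c * exp (- eta - c) = exp (- eta)) by (rewrite <- exp_plus; f_equal; ring).
  assert (exp c * (1 + - c) <= 1) by nra.
  assert (exp c * (1 + (- eta - c)) <= exp (- eta)) by nra.
  assert (H5 : exp c * ((1 - x) * (1 + - c) + x * (1 + (- eta - c))) <= 1 - x + x * exp (- eta)) by nra.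
  replace ((1 - x) * (1 + - c) + x * (1 + (- eta - c))) with 1 in H5 by (unfold c; ring). lra.
Qed.

Lemma hoeff_dist d eta p l : (1 <= d)%nat -> 0 < eta -> (forall i, (i < d)%nat -> 0 < p i) ->
  sumd d p = 1 -> (forall i, (i < d)%nat -> 0 <= l i <= 1) ->
  ln (sumd d (fun i => p i * exp (- eta * l i))) <= - eta * dot d p l + eta ^ 2 / 8.
Proof. intros Hd He Hp Hs Hl.
  set (m := dot d p l).
  assert (Hm : 0 <= m <= 1).
  { unfold m, dot. rewrite sumd_sL. split.
    - apply sL_nonneg. intros x Hx. apply in_seq0 in Hx. pose proof (Hp x Hx); pose proof (Hl x Hx). nra.
    - rewrite <- Hs, sumd_sL. apply sL_le. intros x Hx. apply in_seq0 in Hx. pose proof (Hp x Hx); pose proof (Hl x Hx). nra. }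
  eapply Rle_trans; [|apply hoeff_scalar; auto].
  apply ln_le. apply W_pos; auto.
  rewrite sumd_sL.
  eapply Rle_trans. apply (sL_le _ _ (fun i => p i * (1 - l i + l i * exp (- eta)))).
  { intros x Hx. apply in_seq0 in Hx. pose proof (Hp x Hx). apply Rmult_le_compat_l; [lra|]. apply chord; auto. }
  right. rewrite (sL_ext _ _ (fun i => p i - p i * l i + exp (- eta) * (p i * l i))) by (intros; ring).
  rewrite sL_plus, sL_minus, sL_scal, <- !sumd_sL, Hs. fold (dot d p l). fold m. ring.
Qed.

Lemma per_t d eta p l ut : (1 <= d)%nat -> 0 < eta -> (forall i, (i < d)%nat -> 0 < p i) ->
  sumd d p = 1 -> (forall i, (i < d)%nat -> 0 <= l i <= 1) -> (forall i, (i < d)%nat -> 0 <= ut i) ->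
  norm1 d ut * dot d p l - dot d ut l <=
  norm1 d ut * (eta / 8) + / eta * sumd d (fun i => ut i * ln (exp_update d eta p l i) - ut i * ln (p i)).
Proof. intros Hd He Hp Hs Hl Hu.
  pose proof (hoeff_dist d eta p l Hd He Hp Hs Hl) as Hh.
  pose proof (W_pos d eta p l Hd Hp) as HW.
  set (W := sumd d (fun i => p i * exp (- eta * l i))) in *.
  assert (HN : norm1 d ut = sumd d ut).
  { unfold norm1. rewrite !sumd_sL. apply sL_ext. intros x Hx. apply in_seq0 in Hx. apply Rabs_pos_eq; auto. }
  assert (HS : sumd d (fun i => ut i * ln (exp_update d eta p l i) - ut i * ln (p i)) =
     - eta * dot d ut l - ln W * sumd d ut).
  { unfold dot. rewrite !sumd_sL.
    rewrite <- (sL_scal _ (- eta) (fun i => ut i * l i)), <- (sL_scal _ (ln W) ut), <- sL_minus. apply sL_ext.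
    intros x Hx. apply in_seq0 in Hx. unfold exp_update. fold W.
    pose proof (Hp x Hx). pose proof (exp_pos (- eta * l x)).
    rewrite ln_div, ln_mult, ln_exp by (try apply Rmult_lt_0_compat; auto). ring. }
  rewrite HS, HN.
  assert (0 <= sumd d ut) by (rewrite sumd_sL; apply sL_nonneg; intros x Hx; apply Hu, in_seq0; auto).
  set (N := sumd d ut) in *. set (m := dot d p l) in *. set (du := dot d ut l).
  assert (m <= - ln W / eta + eta / 8).
  { apply Rmult_le_reg_r with eta; auto. unfold Rdiv. rewrite Rmult_plus_distr_r, Rmult_assoc, Rinv_l by lra.
    replace (eta * / 8 * eta) with (eta ^ 2 / 8) by field. lra. }
  assert (N * m <= N * (- ln W / eta + eta / 8)) by (apply Rmult_le_compat_l; auto).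
  replace (/ eta * (- eta * du - ln W * N)) with (- du + N * (- ln W / eta)) by (field; lra).
  lra.
Qed.
Lemma per_i a b v dR al : 0 <= a -> 0 <= b -> 0 < v <= 1 -> 1 <= dR -> 0 <= al < 1 ->
  (0 < al \/ b <= a) ->
  a * ln v - b * ln (al / dR + (1 - al) * v) <=
  (if Rle_dec a b then b - a else 0) * ln (dR / al) +
  (b - (if Rle_dec a b then b - a else 0)) * ln (1 / (1 - al)).
Proof. intros Ha Hb Hv HdR Hal Hor.
  assert (Hq : 0 <= al / dR) by (unfold Rdiv; apply Rmult_le_pos; [lra|left; apply Rinv_0_lt_compat; lra]).
  set (p := al / dR + (1 - al) * v).
  assert (Hp : 0 < p) by (unfold p; nra).
  assert (Hlv : ln v <= 0) by (rewrite <- ln_1; apply ln_le; lra).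
  assert (Hk : ln (1 / (1 - al)) = - ln (1 - al)) by (unfold Rdiv; rewrite Rmult_1_l, ln_Rinv; lra).
  assert (Hpv : ln (1 - al) + ln v <= ln p).
  { rewrite <- ln_mult by lra. apply ln_le; [nra|]. unfold p; lra. }
  rewrite Hk.
  destruct (Rle_dec a b) as [Hab|Hab].
  - assert ((b - a) * - ln p <= (b - a) * ln (dR / al)).
    { destruct Hor as [Hal0|Hba].
      - apply Rmult_le_compat_l; [lra|].
        rewrite ln_div by lra.
        assert (ln (al / dR) <= ln p) by (apply ln_le; [apply Rdiv_lt_0_compat; lra | unfold p; nra]).
        rewrite ln_div in H by lra. lra.
      - replace (b - a) with 0 by lra. lra. }
    assert (a * (ln v - ln p) <= a * - ln (1 - al)) by (apply Rmult_le_compat_l; lra).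
    replace (b - (b - a)) with a by ring. nra.
  - assert ((a - b) * ln v <= 0) by (apply Rmult_le_0_l; lra).
    assert (b * (ln v - ln p) <= b * - ln (1 - al)) by (apply Rmult_le_compat_l; lra).
    replace (b - 0) with b by ring. nra.
Qed.
Lemma norm1_eq d x : (forall i, (i < d)%nat -> 0 <= x i) -> norm1 d x = sumd d x.
Proof. intros H. unfold norm1. rewrite !sumd_sL. apply sL_ext. intros y Hy. apply in_seq0 in Hy. apply Rabs_pos_eq; auto. Qed.

Lemma sum_step d eta alpha ell u T : (1 <= d)%nat -> 0 < eta -> 0 <= alpha < 1 -> (1 <= T)%nat ->
  (forall i, (i < d)%nat -> 0 <= u T i) -> (forall i, (i < d)%nat -> 0 <= u (S T) i) ->
  (forall i, (i < d)%nat -> 0 < alpha \/ u (S T) i <= u T i) ->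
  sumd d (fun i => u T i * ln (exp_update d eta (fixed_share_p d eta alpha ell T) (ell T) i))
  - sumd d (fun i => u (S T) i * ln (fixed_share_p d eta alpha ell (S T) i)) <=
  D_TV d (u (S T)) (u (pred (S T))) * ln (INR d / alpha) +
  (norm1 d (u (S T)) - D_TV d (u (S T)) (u (pred (S T)))) * ln (1 / (1 - alpha)).
Proof. intros Hd He Ha HT Hu1 Hu2 Hor.
  assert (HdR : 1 <= INR d) by (apply (le_INR 1); auto).
  destruct (dist d eta alpha ell T Hd Ha HT) as [D1 D2].
  destruct (eu_props d eta _ (ell T) Hd D1) as [E1 E2].
  rewrite P_succ by lia. rewrite norm1_eq by auto. unfold D_TV. simpl pred.
  rewrite !sumd_sL, <- sL_minus.
  eapply Rle_trans. apply sL_le. intros i Hi. apply in_seq0 in Hi. unfold fs_mix.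
  apply (per_i (u T i) (u (S T) i) _ (INR d) alpha); auto.
  right. rewrite (sL_ext _ _ (fun x => ln (INR d / alpha) * (if Rle_dec (u T x) (u (S T) x) then u (S T) x - u T x else 0) +
     (ln (1 / (1 - alpha)) * u (S T) x - ln (1 / (1 - alpha)) * (if Rle_dec (u T x) (u (S T) x) then u (S T) x - u T x else 0)))) by (intros; ring).
  rewrite sL_plus, sL_minus, !sL_scal. ring.
Qed.

Lemma claim d eta alpha ell u T : (1 <= d)%nat -> 0 < eta -> 0 <= alpha < 1 -> (1 <= T)%nat ->
  (forall t i, (1 <= t <= T)%nat -> (i < d)%nat -> 0 <= ell t i <= 1) ->
  (forall t i, (1 <= t <= T)%nat -> (i < d)%nat -> 0 <= u t i) ->
  (forall t i, (2 <= t <= T)%nat -> (i < d)%nat -> 0 < alpha \/ u t i <= u (pred t) i) ->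
  sum_range 1 T (fun t => norm1 d (u t) * dot d (fixed_share_p d eta alpha ell t) (ell t))
  - sum_range 1 T (fun t => dot d (u t) (ell t))
  <= norm1 d (u 1%nat) * ln (INR d) * / eta
     + eta / 8 * sum_range 1 T (fun t => norm1 d (u t))
     + / eta * sum_range 2 T (fun t => D_TV d (u t) (u (pred t)) * ln (INR d / alpha) +
          (norm1 d (u t) - D_TV d (u t) (u (pred t))) * ln (1 / (1 - alpha)))
     + / eta * sumd d (fun i => u T i * ln (exp_update d eta (fixed_share_p d eta alpha ell T) (ell T) i)).
Proof. intros Hd He Ha HT Hl Hu Hor.
  assert (Hie : 0 < / eta) by (apply Rinv_0_lt_compat; auto).
  induction T as [|T IH]; [lia|].
  destruct (dist d eta alpha ell (S T) Hd Ha HT) as [D1 D2].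
  assert (HlS : forall i, (i < d)%nat -> 0 <= ell (S T) i <= 1) by (intros; apply Hl; auto; lia).
  assert (HuS : forall i, (i < d)%nat -> 0 <= u (S T) i) by (intros; apply Hu; auto; lia).
  pose proof (per_t d eta _ _ _ Hd He D1 D2 HlS HuS) as Hpt.
  rewrite !sumd_sL, sL_minus, <- !sumd_sL in Hpt.
  destruct (Nat.eq_dec T 0) as [->|HT0].
  - assert (E1 : forall f, sum_range 1 1 f = f 1%nat + 0) by reflexivity.
    assert (E2 : forall f, sum_range 2 1 f = 0) by reflexivity.
    rewrite !E1, E2.
    assert (Hp1 : sumd d (fun i => u 1%nat i * ln (fixed_share_p d eta alpha ell 1 i)) = - ln (INR d) * sumd d (u 1%nat)).
    { rewrite !sumd_sL, <- sL_scal. apply sL_ext. intros. simpl. rewrite ln_Rinv. ring. apply (lt_INR 0); lia. }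
    rewrite Hp1 in Hpt. assert (HN := norm1_eq d (u 1%nat) HuS). rewrite HN in Hpt |- *.
    set (Z := sumd d _) in *.
    lra.
  - rewrite !sum_range_S by lia.
    assert (IH' := IH ltac:(lia) ltac:(intros; apply Hl; auto; lia) ltac:(intros; apply Hu; auto; lia)
       ltac:(intros; apply Hor; auto; lia)).
    pose proof (sum_step d eta alpha ell u T Hd He Ha ltac:(lia)
       ltac:(intros; apply Hu; auto; lia) HuS ltac:(intros; apply (Hor (S T)); auto; lia)) as Hs.
    apply (Rmult_le_compat_l (/ eta)) in Hs; [|lra].
    set (X1 := sum_range 1 T _) in *.
    set (X2 := sum_range 1 T _) in *.
    set (X3 := sum_range 1 T _) in *.
    set (X4 := sum_range 2 T _) in *.
    set (Z1 := sumd d (fun i => u T i * _)) in *.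
    set (Z2 := sumd d (fun i => u (S T) i * ln (exp_update _ _ _ _ i))) in *.
    set (Z3 := sumd d (fun i => u (S T) i * ln (fixed_share_p _ _ _ _ _ i))) in *.
    lra.
Qed.
Theorem theorem2 (d : nat) (eta alpha : R) (T : nat)
  (ell : nat -> nat -> R) (u : nat -> nat -> R) :
  (1 <= d)%nat ->
  0 < eta ->
  0 <= alpha < 1 ->
  (1 <= T)%nat ->
  (forall t i, (1 <= t <= T)%nat -> (i < d)%nat -> 0 <= ell t i <= 1) ->
  (forall t i, (1 <= t <= T)%nat -> (i < d)%nat -> 0 <= u t i) ->
  (* convention ln(d/0) = +oo: for alpha = 0 the bound is trivial unless m = 0 *)
  (0 < alpha \/ shifts d u T = 0) ->
  sum_range 1 T (fun t => norm1 d (u t) * dot d (fixed_share_p d eta alpha ell t) (ell t))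
  - sum_range 1 T (fun t => dot d (u t) (ell t))
  <= norm1 d (u 1%nat) * ln (INR d) / eta
     + eta / 8 * sum_range 1 T (fun t => norm1 d (u t))
     + (if Req_EM_T (shifts d u T) 0 then 0
        else shifts d u T / eta * ln (INR d / alpha))
     + (sum_range 2 T (fun t => norm1 d (u t)) - shifts d u T) / eta * ln (1 / (1 - alpha)).
Proof.
  intros Hd He Ha HT Hl Hu Hsh.
  assert (Hie : 0 < / eta) by (apply Rinv_0_lt_compat; auto).
  assert (Hor : forall t i, (2 <= t <= T)%nat -> (i < d)%nat -> 0 < alpha \/ u t i <= u (pred t) i).
  { intros t i Ht Hi. destruct Hsh as [Hsh|Hsh]; [left; auto|right].
    unfold shifts in Hsh. rewrite sum_range_sL in Hsh.
    assert (Hnn : forall t, 0 <= D_TV d (u t) (u (pred t))).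
    { intros s. unfold D_TV. rewrite sumd_sL. apply sL_nonneg. intros x _.
      destruct (Rle_dec _ _); lra. }
    pose proof (sL_zero _ _ (fun t _ => Hnn t) Hsh t ltac:(apply in_seq; lia)) as H0.
    unfold D_TV in H0. rewrite sumd_sL in H0.
    assert (Hpp : forall x, In x (seq 0 d) -> 0 <= (fun i => if Rle_dec (u (pred t) i) (u t i)
      then u t i - u (pred t) i else 0) x).
    { intros x _. simpl. destruct (Rle_dec _ _); lra. }
    pose proof (sL_zero _ _ Hpp H0 i ltac:(apply in_seq; lia)) as H1.
    simpl in H1. destruct (Rle_dec _ _); lra. }
  pose proof (claim d eta alpha ell u T Hd He Ha HT Hl Hu Hor) as Hc.
  destruct (dist d eta alpha ell T Hd Ha HT) as [D1 D2].
  destruct (eu_props d eta _ (ell T) Hd D1) as [E1 E2].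
  assert (Hz : sumd d (fun i => u T i * ln (exp_update d eta (fixed_share_p d eta alpha ell T) (ell T) i)) <= 0).
  { rewrite sumd_sL. eapply Rle_trans. apply (sL_le _ _ (fun _ => 0)).
    - intros x Hx. apply in_seq0 in Hx. pose proof (E1 x Hx).
      assert (ln (exp_update d eta (fixed_share_p d eta alpha ell T) (ell T) x) <= 0)
        by (rewrite <- ln_1; apply ln_le; lra).
      pose proof (Hu T x ltac:(lia) Hx). nra.
    - rewrite sL_const. lra. }
  apply (Rmult_le_compat_l (/ eta)) in Hz; [|lra].
  assert (Hsplit : sum_range 2 T (fun t => D_TV d (u t) (u (pred t)) * ln (INR d / alpha) +
          (norm1 d (u t) - D_TV d (u t) (u (pred t))) * ln (1 / (1 - alpha))) =
          shifts d u T * ln (INR d / alpha) + (sum_range 2 T (fun t => norm1 d (u t)) - shifts d u T) * ln (1 / (1 - alpha))).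
  { unfold shifts. rewrite !sum_range_sL.
    rewrite (sL_ext _ _ (fun t => ln (INR d / alpha) * D_TV d (u t) (u (pred t)) +
          (ln (1 / (1 - alpha)) * norm1 d (u t) - ln (1 / (1 - alpha)) * D_TV d (u t) (u (pred t))))) by (intros; ring).
    rewrite sL_plus, sL_minus, !sL_scal. ring. }
  rewrite Hsplit in Hc.
  set (S := shifts d u T) in *.
  destruct (Req_EM_T S 0) as [e|e].
  - rewrite e in Hc |- *. unfold Rdiv in *. lra.
  - unfold Rdiv in *. lra.
Qed.
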